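(* Let $\alpha,\beta\in[0,\pi/2]$ with $\alpha\neq\beta$ and $\alpha\neq\pi/2-\beta$. Define, in $\mathbb{C}^2\otimes\mathbb{C}^2$, $\ket{\phi^+_\theta}=\sin\theta\ket{00}+\cos\theta\ket{11}$, $\ket{\phi^-_\theta}=\cos\theta\ket{00}-\sin\theta\ket{11}$, $\ket{\psi^+_\theta}=\sin\theta\ket{01}+\cos\theta\ket{10}$, $\ket{\psi^-_\theta}=\cos\theta\ket{01}-\sin\theta\ket{10}$, and $\ket{a_1}=\ket{\phi^-_\alpha}$, $\ket{a_2}=\ket{\psi^-_\beta}$, $\ket{a_3}=\tfrac{1}{\sqrt2}(\ket{\phi^+_\alpha}+\ket{\psi^+_\beta})$, $\ket{a_4}=\tfrac{1}{\sqrt2}(\ket{\phi^+_\alpha}-\ket{\psi^+_\beta})$. Then for every choice of $i\neq j$ in $\{1,2,3,4\}$, the projector onto the two-dimensional subspace $\mathrm{Span}\{\ket{a_i},\ket{a_j}\}$ is entangled (i.e., not separable).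
   Context: $\{\ket{0},\ket{1}\}$ is the computational basis of $\mathbb{C}^2$ and $\ket{ab}=\ket{a}\otimes\ket{b}$. A positive operator on $\mathbb{C}^2\otimes\mathbb{C}^2$ is separable if it is a nonnegative combination of product operators $A\otimes B$ with $A,B\ge0$, and entangled otherwise. The states $\ket{a_1},\dots,\ket{a_4}$ form an orthonormal basis (the set $\mathcal{A}_{\pi/4}^{[\alpha,\beta]}$ in the paper). *)

(* Defs.v *)
From HB Require Import structures.
From mathcomp Require Import all_boot all_order all_algebra.
From mathcomp Require Import complex mxtens.
From mathcomp Require Import reals trigo.
Set Implicit Arguments. Unset Strict Implicit. Unset Printing Implicit Defensive.
Import Order.TTheory GRing.Theory Num.Theory.
Local Open Scope ring_scope.
Local Open Scope complex_scope.

Section Defs.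
Variable R : realType.
Local Notation C := R[i].

Definition adj {m n} (A : 'M[C]_(m, n)) : 'M[C]_(n, m) :=
  \matrix_(i, j) (A j i)^*.

Definition hermitian {n} (A : 'M[C]_n) : Prop := adj A = A.

Definition psd {n} (A : 'M[C]_n) : Prop :=
  hermitian A /\ forall v : 'cV[C]_n, 0 <= (adj v *m A *m v) 0 0.

Definition separable (P : 'M[C]_(2 * 2)) : Prop :=
  exists (k : nat) (c : 'I_k -> R) (A B : 'I_k -> 'M[C]_2),
    (forall l, 0 <= c l /\ psd (A l) /\ psd (B l)) /\
    P = \sum_(l < k) (c l)%:C *: (A l *t B l).

Definition entangled (P : 'M[C]_(2 * 2)) : Prop := psd P /\ ~ separable P.

Definition ket (a : 'I_2) : 'cV[C]_2 := delta_mx a 0.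
Definition ket2 (a b : 'I_2) : 'cV[C]_(2 * 2) := ket a *t ket b.

Definition o0 : 'I_2 := ord0.
Definition o1 : 'I_2 := ord_max.

Definition phi_p (t : R) : 'cV[C]_(2 * 2) :=
  (sin t)%:C *: ket2 o0 o0 + (cos t)%:C *: ket2 o1 o1.
Definition phi_m (t : R) : 'cV[C]_(2 * 2) :=
  (cos t)%:C *: ket2 o0 o0 - (sin t)%:C *: ket2 o1 o1.
Definition psi_p (t : R) : 'cV[C]_(2 * 2) :=
  (sin t)%:C *: ket2 o0 o1 + (cos t)%:C *: ket2 o1 o0.
Definition psi_m (t : R) : 'cV[C]_(2 * 2) :=
  (cos t)%:C *: ket2 o0 o1 - (sin t)%:C *: ket2 o1 o0.

(* the basis A_{pi/4}^{[alpha,beta]} ; index 0,1,2,3 stands for a_1..a_4 *)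
Definition avec (al be : R) (k : 'I_4) : 'cV[C]_(2 * 2) :=
  let s := (Num.sqrt 2)^-1%:C in
  match val k with
  | 0 => phi_m al
  | 1 => psi_m be
  | 2 => s *: (phi_p al + psi_p be)
  | _ => s *: (phi_p al - psi_p be)
  end.

(* P is the (orthogonal) projector onto the column space spanned by the
   columns of V : Hermitian, idempotent, with column space equal to that of V
   (column spaces expressed via row spaces of transposes). *)
Definition projector_onto {n m} (P : 'M[C]_n) (V : 'M[C]_(n, m)) : Prop :=
  hermitian P /\ P *m P = P /\ (P^T :=: V^T)%MS.

End Defs.

(* Main.v *)
Require Import Defs.
From HB Require Import structures.
From mathcomp Require Import all_boot all_order all_algebra.
From mathcomp Require Import complex mxtens.
From mathcomp Require Import reals trigo.
From mathcomp Require Import ring lra.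
Import Order.TTheory GRing.Theory Num.Theory.
Local Open Scope ring_scope.
Local Open Scope complex_scope.
Set Implicit Arguments. Unset Strict Implicit. Unset Printing Implicit Defensive.
Section Real.
Variable R : realType.

Definition vec4 (a b c d : R) : nat -> R :=
  fun x => match x with 0 => a | 1 => b | 2 => c | _ => d end.
Definition hi (x : nat) : nat := match x with 2 | 3 => 1 | _ => 0 end.
Definition lo (x : nat) : nat := match x with 1 | 3 => 1 | _ => 0 end.
Definition idx (a b : nat) : nat :=
  match a, b with 0, 0 => 0 | 0, _ => 1 | _, 0 => 2 | _, _ => 3 end.
Definition wv (v : nat -> R) (x y : nat) : R :=
  v (idx (hi x) (lo y)) * v (idx (hi y) (lo x)).
Definition s4 (F : nat -> R) : R := F 0%N + F 1%N + F 2%N + F 3%N.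
Definition Fw (v : nat -> R) (g : nat -> nat -> R) : R :=
  s4 (fun x => s4 (fun y => wv v x y * g x y)).
Definition ip (v u : nat -> R) : R := s4 (fun x => v x * u x).
Definition dt (u : nat -> R) : R := u 0%N * u 3%N - u 1%N * u 2%N.

Lemma Fw_id v u w :
  Fw v (fun x y => u x * u y + w x * w y) =
  ip v u ^+ 2 + ip v w ^+ 2 - 2 * dt v * (dt u + dt w).
Proof. rewrite /Fw /ip /dt /s4 /wv /=; ring. Qed.

Lemma quad (A B C : R) :
  (forall y z, 0 <= A * y ^+ 2 + B * y * z + C * z ^+ 2) -> B ^+ 2 <= 4 * A * C.
Proof.
move=> H.
have HA : 0 <= A by have := H 1 0; rewrite !expr2; lra.
have HC : 0 <= C by have := H 0 1; rewrite !expr2; lra.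
have [A0|Apos] := eqVneq A 0.
  have [B0|Bn0] := eqVneq B 0; first by rewrite B0 A0; lra.
  have := H (- (C + 1) / B) 1; rewrite A0 !expr2 mul0r add0r !mulr1.
  have -> : B * (- (C + 1) / B) = - (C + 1) by field.
  lra.
have Ap : 0 < A by rewrite lt_def Apos.
have := H (- B) (2 * A).
rewrite !expr2 => H1.
have : 0 <= A * (4 * A * C - B * B) by nra.
rewrite pmulr_rge0 // subr_ge0 //.
Qed.

Definition b12 (v1 v2 : nat -> R) : R :=
  dt (fun x => v1 x + v2 x) - dt v1 - dt v2.

Lemma plane_contra (v1 v2 u w : nat -> R) :
  ip v1 u = 0 -> ip v2 u = 0 -> ip v1 w = 0 -> ip v2 w = 0 ->
  dt u + dt w != 0 -> 4 * dt v1 * dt v2 < b12 v1 v2 ^+ 2 ->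
  (forall y z, 0 <= Fw (fun x => y * v1 x + z * v2 x)
                         (fun x y => u x * u y + w x * w y)) -> False.
Proof.
move=> h1 h2 h3 h4 hD hb H.
set D := dt u + dt w.
have Hq : (-2 * D * b12 v1 v2) ^+ 2 <= 4 * (-2 * D * dt v1) * (-2 * D * dt v2).
  apply: quad => y z.
  have E : Fw (fun x => y * v1 x + z * v2 x) (fun x y => u x * u y + w x * w y)
    = (-2 * D * dt v1) * y ^+ 2 + (-2 * D * b12 v1 v2) * y * z
          + (-2 * D * dt v2) * z ^+ 2.
    rewrite Fw_id.
    have -> : ip (fun x => y * v1 x + z * v2 x) u = y * ip v1 u + z * ip v2 u.
      by rewrite /ip /s4; ring.
    have -> : ip (fun x => y * v1 x + z * v2 x) w = y * ip v1 w + z * ip v2 w.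
      by rewrite /ip /s4; ring.
    rewrite h1 h2 h3 h4 /D /b12 /dt; ring.
  by rewrite -E.
move: Hq.
have D2 : 0 < D ^+ 2 by rewrite exprn_even_gt0.
nra.
Qed.

Lemma block_contra (v1 v2 u w : nat -> R) (A B C : R) :
  (forall y z, Fw (fun x => y * v1 x + z * v2 x)
                  (fun x y => u x * u y + w x * w y) = A * y ^+ 2 + B * y * z + C * z ^+ 2) ->
  4 * A * C < B ^+ 2 ->
  (forall y z, 0 <= Fw (fun x => y * v1 x + z * v2 x)
                         (fun x y => u x * u y + w x * w y)) -> False.
Proof.
move=> E h H.
have : B ^+ 2 <= 4 * A * C by apply: quad => y z; rewrite -E.
lra.
Qed.

Definition fa' (sa ca sb cb r : R) (k : nat) : nat -> R :=
  match k with
  | 0 => vec4 ca 0 0 (- sa)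
  | 1 => vec4 0 cb (- sb) 0
  | 2 => vec4 (r * sa) (r * sb) (r * cb) (r * ca)
  | _ => vec4 (r * sa) (- (r * sb)) (- (r * cb)) (r * ca)
  end.

Definition Pg (u w : nat -> R) := fun x y : nat => u x * u y + w x * w y.

Definition good (sa ca sb cb r : R) : Prop :=
  (0 <= sa) /\ (0 <= ca) /\ (0 <= sb) /\ (0 <= cb) /\ (sa ^+ 2 + ca ^+ 2 = 1)
  /\ (sb ^+ 2 + cb ^+ 2 = 1) /\ (ca != cb) /\ (ca != sb) /\ (2 * r ^+ 2 = 1).

Ltac gd := move=> [sa0 [ca0 [sb0 [cb0 [ha [hb [hcc [hcs hr]]]]]]]].

Lemma fact1 sa ca sb cb r : good sa ca sb cb r -> sa * ca != sb * cb.
Proof.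
gd.
apply/eqP => E.
have E1 : (sa + ca) ^+ 2 = (sb + cb) ^+ 2.
  have -> : (sa + ca) ^+ 2 = (sa ^+ 2 + ca ^+ 2) + 2 * (sa * ca) by ring.
  have -> : (sb + cb) ^+ 2 = (sb ^+ 2 + cb ^+ 2) + 2 * (sb * cb) by ring.
  by rewrite ha hb E.
have E2 : (ca - sa) ^+ 2 = (cb - sb) ^+ 2.
  have -> : (ca - sa) ^+ 2 = (sa ^+ 2 + ca ^+ 2) - 2 * (sa * ca) by ring.
  have -> : (cb - sb) ^+ 2 = (sb ^+ 2 + cb ^+ 2) - 2 * (sb * cb) by ring.
  by rewrite ha hb E.
move/eqP: E1; rewrite eqf_sqr => /orP [] /eqP F1; last first.
  have s0 : sa = 0 by lra.
  have c0 : ca = 0 by lra.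
  by move: ha; rewrite s0 c0 expr0n /= add0r => /eqP; rewrite eq_sym oner_eq0.
move/eqP: E2; rewrite eqf_sqr => /orP [] /eqP F2.
  by move/eqP: hcc; apply; lra.
by move/eqP: hcs; apply; lra.
Qed.

Lemma fact2 sa ca sb cb r : good sa ca sb cb r -> 4 * sa * ca * sb * cb < 1.
Proof.
gd.
have X1 : 2 * (sa * ca) <= 1.
  have := sqr_ge0 (sa - ca); rewrite -ha; move=> h; nra.
have X2 : 2 * (sb * cb) <= 1.
  have := sqr_ge0 (sb - cb); rewrite -hb; move=> h; nra.
have X0 : 0 <= sa * ca by nra.
have Y0 : 0 <= sb * cb by nra.
rewrite ltNge; apply/negP => H.
have H' : 1 <= (2 * (sa * ca)) * (2 * (sb * cb)) by move: H; rewrite -!mulrA; nra.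
have Ea : 2 * (sa * ca) = 1 by nra.
have Eb : 2 * (sb * cb) = 1 by nra.
have Sa : sa = ca.
  have : (sa - ca) ^+ 2 = 0.
    have -> : (sa - ca) ^+ 2 = (sa ^+ 2 + ca ^+ 2) - 2 * (sa * ca) by ring.
    by rewrite ha Ea subrr.
  by move/eqP; rewrite sqrf_eq0 subr_eq0 => /eqP.
have Sb : sb = cb.
  have : (sb - cb) ^+ 2 = 0.
    have -> : (sb - cb) ^+ 2 = (sb ^+ 2 + cb ^+ 2) - 2 * (sb * cb) by ring.
    by rewrite hb Eb subrr.
  by move/eqP; rewrite sqrf_eq0 subr_eq0 => /eqP.
have : ca ^+ 2 = cb ^+ 2.
  have : 2 * ca ^+ 2 = 1 by move: ha; rewrite Sa; lra.
  have : 2 * cb ^+ 2 = 1 by move: hb; rewrite Sb; lra.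
  lra.
move/eqP; rewrite eqf_sqr => /orP [] /eqP F.
  by move/eqP: hcc.
have : ca = 0 by lra.
have : cb = 0 by lra.
by move=> c1 c2; move/eqP: hcc; apply; rewrite c1 c2.
Qed.

Lemma fact3 sa ca sb cb r : good sa ca sb cb r -> 0 < sa * ca + sb * cb.
Proof.
move=> G; have := @fact1 _ _ _ _ _ G; move: G; gd.
have X0 : 0 <= sa * ca by nra.
have Y0 : 0 <= sb * cb by nra.
move=> F; rewrite ltNge; apply/negP => H.
have E1 : sa * ca = 0 by lra.
have E2 : sb * cb = 0 by lra.
by move: F; rewrite E1 E2 eqxx.
Qed.

Lemma Pg_sym v u w : Fw v (Pg u w) = Fw v (Pg w u).
Proof. rewrite /Fw /Pg /s4; ring. Qed.

Lemma r2_of (r : R) : 2 * r ^+ 2 = 1 -> r ^+ 2 = 2^-1.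
Proof. move=> h; have -> : r ^+ 2 = (2 * r ^+ 2) / 2 by field. by rewrite h mul1r. Qed.


Lemma P02 sa ca sb cb r : good sa ca sb cb r ->
  (forall v, 0 <= Fw v (Pg (fa' sa ca sb cb r 0) (fa' sa ca sb cb r 2))) -> False.
Proof.
move=> G H.
have f1 := @fact1 sa ca sb cb r G.
have f2 := @fact2 sa ca sb cb r G.
have f3 := @fact3 sa ca sb cb r G.
move: G => [sa0 [ca0 [sb0 [cb0 [ha [hb [hcc [hcs hr]]]]]]]].
have r2 := @r2_of r hr.
apply: (@plane_contra (fa' sa ca sb cb r 1) (vec4 sa (- sb) (- cb) ca) (fa' sa ca sb cb r 0) (fa' sa ca sb cb r 2)).
- by rewrite /ip /s4 /=; ring.
- by rewrite /ip /s4 /=; ring.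
- by rewrite /ip /s4 /=; ring.
- rewrite /ip /s4 /=.
  transitivity (r * ((sa ^+ 2 + ca ^+ 2) - (sb ^+ 2 + cb ^+ 2))); first by ring.
  by rewrite ha hb subrr mulr0.
- have -> : dt (fa' sa ca sb cb r 0) + dt (fa' sa ca sb cb r 2) =
     - (sa * ca) + r ^+ 2 * (sa * ca - sb * cb) by rewrite /dt /=; ring.
  rewrite r2; apply/eqP => h; lra.
- have : b12 (fa' sa ca sb cb r 1) (vec4 sa (- sb) (- cb) ca) ^+ 2 - 4 * dt (fa' sa ca sb cb r 1) * dt (vec4 sa (- sb) (- cb) ca) =
     (sb ^+ 2 + cb ^+ 2) ^+ 2 - 4 * sa * ca * sb * cb by rewrite /b12 /dt /=; ring.
  rewrite hb. lra.
- by move=> y z; apply: H.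
Qed.

Lemma P03 sa ca sb cb r : good sa ca sb cb r ->
  (forall v, 0 <= Fw v (Pg (fa' sa ca sb cb r 0) (fa' sa ca sb cb r 3))) -> False.
Proof.
move=> G H.
have f1 := @fact1 sa ca sb cb r G.
have f2 := @fact2 sa ca sb cb r G.
have f3 := @fact3 sa ca sb cb r G.
move: G => [sa0 [ca0 [sb0 [cb0 [ha [hb [hcc [hcs hr]]]]]]]].
have r2 := @r2_of r hr.
apply: (@plane_contra (fa' sa ca sb cb r 1) (vec4 sa sb cb ca) (fa' sa ca sb cb r 0) (fa' sa ca sb cb r 3)).
- by rewrite /ip /s4 /=; ring.
- by rewrite /ip /s4 /=; ring.
- by rewrite /ip /s4 /=; ring.
- rewrite /ip /s4 /=.
  transitivity (r * ((sa ^+ 2 + ca ^+ 2) - (sb ^+ 2 + cb ^+ 2))); first by ring.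
  by rewrite ha hb subrr mulr0.
- have -> : dt (fa' sa ca sb cb r 0) + dt (fa' sa ca sb cb r 3) =
     - (sa * ca) + r ^+ 2 * (sa * ca - sb * cb) by rewrite /dt /=; ring.
  rewrite r2; apply/eqP => h; lra.
- have : b12 (fa' sa ca sb cb r 1) (vec4 sa sb cb ca) ^+ 2 - 4 * dt (fa' sa ca sb cb r 1) * dt (vec4 sa sb cb ca) =
     (sb ^+ 2 + cb ^+ 2) ^+ 2 - 4 * sa * ca * sb * cb by rewrite /b12 /dt /=; ring.
  rewrite hb. lra.
- by move=> y z; apply: H.
Qed.

Lemma P12 sa ca sb cb r : good sa ca sb cb r ->
  (forall v, 0 <= Fw v (Pg (fa' sa ca sb cb r 1) (fa' sa ca sb cb r 2))) -> False.
Proof.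
move=> G H.
have f1 := @fact1 sa ca sb cb r G.
have f2 := @fact2 sa ca sb cb r G.
have f3 := @fact3 sa ca sb cb r G.
move: G => [sa0 [ca0 [sb0 [cb0 [ha [hb [hcc [hcs hr]]]]]]]].
have r2 := @r2_of r hr.
apply: (@plane_contra (fa' sa ca sb cb r 0) (vec4 sa (- sb) (- cb) ca) (fa' sa ca sb cb r 1) (fa' sa ca sb cb r 2)).
- by rewrite /ip /s4 /=; ring.
- by rewrite /ip /s4 /=; ring.
- by rewrite /ip /s4 /=; ring.
- rewrite /ip /s4 /=.
  transitivity (r * ((sa ^+ 2 + ca ^+ 2) - (sb ^+ 2 + cb ^+ 2))); first by ring.
  by rewrite ha hb subrr mulr0.
- have -> : dt (fa' sa ca sb cb r 1) + dt (fa' sa ca sb cb r 2) =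
      (sb * cb) + r ^+ 2 * (sa * ca - sb * cb) by rewrite /dt /=; ring.
  rewrite r2; apply/eqP => h; lra.
- have : b12 (fa' sa ca sb cb r 0) (vec4 sa (- sb) (- cb) ca) ^+ 2 - 4 * dt (fa' sa ca sb cb r 0) * dt (vec4 sa (- sb) (- cb) ca) =
     (sa ^+ 2 + ca ^+ 2) ^+ 2 - 4 * sa * ca * sb * cb by rewrite /b12 /dt /=; ring.
  rewrite ha. lra.
- by move=> y z; apply: H.
Qed.

Lemma P13 sa ca sb cb r : good sa ca sb cb r ->
  (forall v, 0 <= Fw v (Pg (fa' sa ca sb cb r 1) (fa' sa ca sb cb r 3))) -> False.
Proof.
move=> G H.
have f1 := @fact1 sa ca sb cb r G.
have f2 := @fact2 sa ca sb cb r G.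
have f3 := @fact3 sa ca sb cb r G.
move: G => [sa0 [ca0 [sb0 [cb0 [ha [hb [hcc [hcs hr]]]]]]]].
have r2 := @r2_of r hr.
apply: (@plane_contra (fa' sa ca sb cb r 0) (vec4 sa sb cb ca) (fa' sa ca sb cb r 1) (fa' sa ca sb cb r 3)).
- by rewrite /ip /s4 /=; ring.
- by rewrite /ip /s4 /=; ring.
- by rewrite /ip /s4 /=; ring.
- rewrite /ip /s4 /=.
  transitivity (r * ((sa ^+ 2 + ca ^+ 2) - (sb ^+ 2 + cb ^+ 2))); first by ring.
  by rewrite ha hb subrr mulr0.
- have -> : dt (fa' sa ca sb cb r 1) + dt (fa' sa ca sb cb r 3) =
      (sb * cb) + r ^+ 2 * (sa * ca - sb * cb) by rewrite /dt /=; ring.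
  rewrite r2; apply/eqP => h; lra.
- have : b12 (fa' sa ca sb cb r 0) (vec4 sa sb cb ca) ^+ 2 - 4 * dt (fa' sa ca sb cb r 0) * dt (vec4 sa sb cb ca) =
     (sa ^+ 2 + ca ^+ 2) ^+ 2 - 4 * sa * ca * sb * cb by rewrite /b12 /dt /=; ring.
  rewrite ha. lra.
- by move=> y z; apply: H.
Qed.

Lemma P01 sa ca sb cb r : good sa ca sb cb r ->
  (forall v, 0 <= Fw v (Pg (fa' sa ca sb cb r 0) (fa' sa ca sb cb r 1))) -> False.
Proof.
move=> G H.
have f1 := @fact1 sa ca sb cb r G.
move: G => [sa0 [ca0 [sb0 [cb0 [ha [hb [hcc [hcs hr]]]]]]]].
have X0 : 0 <= sa * ca by nra.
have Y0 : 0 <= sb * cb by nra.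
have [lt|gt|eq] := ltgtP (sa * ca) (sb * cb); last by move: f1; rewrite eq eqxx.
- apply: (@block_contra (vec4 1 0 0 0) (vec4 0 0 0 1) (fa' sa ca sb cb r 0) (fa' sa ca sb cb r 1) (ca ^+ 2) (- (2 * (sb * cb))) (sa ^+ 2)).
  + by move=> y z; rewrite /Pg Fw_id /ip /dt /s4 /=; ring.
  + have -> : 4 * ca ^+ 2 * sa ^+ 2 = 4 * (sa * ca) ^+ 2 by ring.
    have -> : (- (2 * (sb * cb))) ^+ 2 = 4 * (sb * cb) ^+ 2 by ring.
    nra.
  + by move=> y z; apply: H.
- apply: (@block_contra (vec4 0 1 0 0) (vec4 0 0 1 0) (fa' sa ca sb cb r 0) (fa' sa ca sb cb r 1) (cb ^+ 2) (- (2 * (sa * ca))) (sb ^+ 2)).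
  + by move=> y z; rewrite /Pg Fw_id /ip /dt /s4 /=; ring.
  + have -> : 4 * cb ^+ 2 * sb ^+ 2 = 4 * (sb * cb) ^+ 2 by ring.
    have -> : (- (2 * (sa * ca))) ^+ 2 = 4 * (sa * ca) ^+ 2 by ring.
    nra.
  + by move=> y z; apply: H.
Qed.

Lemma P23 sa ca sb cb r : good sa ca sb cb r ->
  (forall v, 0 <= Fw v (Pg (fa' sa ca sb cb r 2) (fa' sa ca sb cb r 3))) -> False.
Proof.
move=> G H.
have f1 := @fact1 sa ca sb cb r G.
move: G => [sa0 [ca0 [sb0 [cb0 [ha [hb [hcc [hcs hr]]]]]]]].
have X0 : 0 <= sa * ca by nra.
have Y0 : 0 <= sb * cb by nra.
have [lt|gt|eq] := ltgtP (sa * ca) (sb * cb); last by move: f1; rewrite eq eqxx.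
- apply: (@block_contra (vec4 1 0 0 0) (vec4 0 0 0 1) (fa' sa ca sb cb r 2) (fa' sa ca sb cb r 3) (sa ^+ 2) (2 * (sb * cb)) (ca ^+ 2)).
  + move=> y z; rewrite /Pg Fw_id /ip /dt /s4 /=.
    transitivity ((2 * r ^+ 2) * (sa ^+ 2 * y ^+ 2 + 2 * (sb * cb) * y * z + ca ^+ 2 * z ^+ 2)); first by ring.
    by rewrite hr mul1r.
  + have -> : 4 * sa ^+ 2 * ca ^+ 2 = 4 * (sa * ca) ^+ 2 by ring.
    have -> : (2 * (sb * cb)) ^+ 2 = 4 * (sb * cb) ^+ 2 by ring.
    nra.
  + by move=> y z; apply: H.
- apply: (@block_contra (vec4 0 1 0 0) (vec4 0 0 1 0) (fa' sa ca sb cb r 2) (fa' sa ca sb cb r 3) (sb ^+ 2) (2 * (sa * ca)) (cb ^+ 2)).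
  + move=> y z; rewrite /Pg Fw_id /ip /dt /s4 /=.
    transitivity ((2 * r ^+ 2) * (sb ^+ 2 * y ^+ 2 + 2 * (sa * ca) * y * z + cb ^+ 2 * z ^+ 2)); first by ring.
    by rewrite hr mul1r.
  + have -> : 4 * sb ^+ 2 * cb ^+ 2 = 4 * (sb * cb) ^+ 2 by ring.
    have -> : (2 * (sa * ca)) ^+ 2 = 4 * (sa * ca) ^+ 2 by ring.
    nra.
  + by move=> y z; apply: H.
Qed.

Lemma pair_contra sa ca sb cb r (i j : nat) : good sa ca sb cb r ->
  (i < 4)%N -> (j < 4)%N -> i != j ->
  (forall v, 0 <= Fw v (Pg (fa' sa ca sb cb r i) (fa' sa ca sb cb r j))) -> False.
Proof.
move=> G Hi Hj Hij H.
case: i Hi Hij H => [|[|[|[|i]]]] //; case: j Hj => [|[|[|[|j]]]] //= _ _ _ H.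
- by apply: (@P01 _ _ _ _ _ G).
- by apply: (@P02 _ _ _ _ _ G).
- by apply: (@P03 _ _ _ _ _ G).
- by apply: (@P01 _ _ _ _ _ G) => v; rewrite Pg_sym.
- by apply: (@P12 _ _ _ _ _ G).
- by apply: (@P13 _ _ _ _ _ G).
- by apply: (@P02 _ _ _ _ _ G) => v; rewrite Pg_sym.
- by apply: (@P12 _ _ _ _ _ G) => v; rewrite Pg_sym.
- by apply: (@P23 _ _ _ _ _ G).
- by apply: (@P03 _ _ _ _ _ G) => v; rewrite Pg_sym.
- by apply: (@P13 _ _ _ _ _ G) => v; rewrite Pg_sym.
- by apply: (@P23 _ _ _ _ _ G) => v; rewrite Pg_sym.
Qed.
End Real.

Section C.
Variable R : realType.
Local Notation C := R[i].
Definition z0 : 'I_2 := @Ordinal 2 0 isT.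
Definition z1 : 'I_2 := @Ordinal 2 1 isT.
Definition qf2 (M : 'M[C]_2) (x y : C) :=
  conjc x * M z0 z0 * x + conjc x * M z0 z1 * y + conjc y * M z1 z0 * x + conjc y * M z1 z1 * y.
Definition psd2 (M : 'M[C]_2) := forall x y, 0 <= qf2 M x y.

Lemma psd2_entries M : psd2 M -> exists a d p q : R,
  [/\ M z0 z0 = a%:C, M z1 z1 = d%:C, M z0 z1 = p +i* q, M z1 z0 = p -i* q &
   [/\ 0 <= a, 0 <= d & p ^+ 2 + q ^+ 2 <= a * d]].
Proof.
rewrite /psd2 /qf2.
move: (M z0 z0) (M z0 z1) (M z1 z0) (M z1 z1) => [a1 a2] [b1 b2] [c1 c2] [d1 d2] H.
have := H 1 0; rewrite /=; simpc => /andP [/eqP e1 ha]; subst a2.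
have := H 0 1; rewrite /=; simpc => /andP [/eqP e2 hd]; subst d2.
have := H 1 1; rewrite /=; simpc => /andP [/eqP e3 _].
have := H 1 (0 +i* 1); rewrite /=; simpc => /andP [/eqP e4 _].
have ec1 : c1 = b1 by lra.
have ec2 : c2 = - b2 by lra.
subst c1 c2.
have := H (d1 +i* 0) ((- b1) +i* b2); rewrite /=; simpc => /andP [_ h5].
have := H ((- b1) +i* (- b2)) (a1 +i* 0); rewrite /=; simpc => /andP [_ h6].
have := H 1 ((- b1) +i* b2); rewrite /=; simpc => /andP [_ h7].
exists a1, d1, b1, b2; split => //; split => //.
have k5 : 0 <= d1 * (a1 * d1 - (b1 ^+ 2 + b2 ^+ 2)) by lra.
have k6 : 0 <= a1 * (a1 * d1 - (b1 ^+ 2 + b2 ^+ 2)) by lra.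
have k7 : 0 <= a1 + d1 * (b1 ^+ 2 + b2 ^+ 2) - 2 * (b1 ^+ 2 + b2 ^+ 2) by lra.
rewrite -subr_ge0.
have [a0|apos] := eqVneq a1 0.
  have [d0|dpos] := eqVneq d1 0.
    move: k7; rewrite a0 d0 !mul0r; have := sqr_ge0 b1; have := sqr_ge0 b2; lra.
  have dp : 0 < d1 by rewrite lt_def dpos.
  by move: k5; rewrite pmulr_rge0.
have ap : 0 < a1 by rewrite lt_def apos.
by move: k6; rewrite pmulr_rge0.
Qed.

Lemma tr2 G B : psd2 G -> psd2 B ->
  0 <= G z0 z0 * B z0 z0 + G z0 z1 * B z1 z0 + G z1 z0 * B z0 z1 + G z1 z1 * B z1 z1.
Proof.
move=> /psd2_entries [g0 [g1 [p [q [-> -> -> -> [h0 h1 hpq]]]]]].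
move=> /psd2_entries [b0 [b1 [r [s [-> -> -> -> [k0 k1 krs]]]]]].
rewrite /=; simpc; apply/andP; split; first by apply/eqP; ring.
have c1 : (p * r + q * s) ^+ 2 <= (p ^+ 2 + q ^+ 2) * (r ^+ 2 + s ^+ 2).
  have := sqr_ge0 (p * s - q * r); nra.
have c2 : (p ^+ 2 + q ^+ 2) * (r ^+ 2 + s ^+ 2) <= (g0 * g1) * (b0 * b1).
  apply: ler_pM => //; by rewrite addr_ge0 // sqr_ge0.
have c3 : 4 * ((g0 * g1) * (b0 * b1)) <= (g0 * b0 + g1 * b1) ^+ 2.
  have := sqr_ge0 (g0 * b0 - g1 * b1); nra.
have X0 : 0 <= g0 * b0 + g1 * b1 by rewrite addr_ge0 // mulr_ge0.
have : (2 * (p * r + q * s)) ^+ 2 <= (g0 * b0 + g1 * b1) ^+ 2 by nra.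
move=> c4.
nra.
Qed.

Definition Gm (v : nat -> R) (A : 'M[C]_2) : 'M[C]_2 :=
  \matrix_(b, d) \sum_(a < 2) \sum_(c < 2) (v (idx a b) * v (idx c d))%:C * A a c.

Lemma sum2 (F : 'I_2 -> C) : \sum_(i < 2) F i = F z0 + F z1.
Proof.
rewrite !big_ord_recr big_ord0 /= add0r.
by congr (F _ + F _); apply/val_inj.
Qed.

Lemma conjRM (a : R) (x : C) : conjc ((a%:C) * x) = a%:C * conjc x.
Proof. by case: x => p q /=; simpc. Qed.

Lemma Gm_psd2 v A : psd2 A -> psd2 (Gm v A).
Proof.
move=> H x y.
have := H ((v 0%N)%:C * x + (v 1%N)%:C * y) ((v 2%N)%:C * x + (v 3%N)%:C * y).
have -> : qf2 (Gm v A) x y = qf2 A ((v 0%N)%:C * x + (v 1%N)%:C * y) ((v 2%N)%:C * x + (v 3%N)%:C * y) => //.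
rewrite /qf2 !mxE !sum2 !raddfD /=.
rewrite !conjRM.
ring.
Qed.

Definition x0 : 'I_(2*2) := @Ordinal (2*2) 0 isT.
Definition x1 : 'I_(2*2) := @Ordinal (2*2) 1 isT.
Definition x2 : 'I_(2*2) := @Ordinal (2*2) 2 isT.
Definition x3 : 'I_(2*2) := @Ordinal (2*2) 3 isT.

Lemma sum4 (F : 'I_(2*2) -> C) : \sum_(x < 2*2) F x = F x0 + F x1 + F x2 + F x3.
Proof.
rewrite !big_ord_recr big_ord0 /= add0r.
by congr (F _ + F _ + F _ + F _); apply/val_inj.
Qed.

Definition o2 (n : nat) : 'I_2 := if n is 0 then z0 else z1.

Lemma tensE (A B : 'M[C]_2) (x y : 'I_(2*2)) :
  (A *t B) x y = A (o2 (hi x)) (o2 (hi y)) * B (o2 (lo x)) (o2 (lo y)).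
Proof.
rewrite mxE; congr (A _ _ * B _ _); apply/val_inj.
- by case: x => [[|[|[|[|x]]]] Hx].
- by case: y => [[|[|[|[|y]]]] Hy].
- by case: x => [[|[|[|[|x]]]] Hx].
- by case: y => [[|[|[|[|y]]]] Hy].
Qed.

Definition ptf (v : nat -> R) (X : 'M[C]_(2*2)) : C :=
  \sum_(x < 2*2) \sum_(y < 2*2) (wv v x y)%:C * X x y.

Lemma ptf_tens v A B : ptf v (A *t B) =
  (Gm v A) z0 z0 * B z0 z0 + (Gm v A) z0 z1 * B z1 z0 +
  (Gm v A) z1 z0 * B z0 z1 + (Gm v A) z1 z1 * B z1 z1.
Proof.
rewrite /ptf !sum4 !tensE /= !mxE !sum2 /= /wv /= !rmorphM.
ring.
Qed.

Lemma psd_psd2 (M : 'M[C]_2) : psd M -> psd2 M.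
Proof.
move=> [_ H] x y.
have := H (\col_i (if val i == 0%N then x else y)).
have -> : (adj (\col_i (if val i == 0%N then x else y)) *m M *m
            (\col_i (if val i == 0%N then x else y))) 0 0 = qf2 M x y => //.
rewrite !mxE !sum2 !mxE !sum2 !mxE /= /qf2.
ring.
Qed.

Lemma ptf_sep v P : separable P -> 0 <= ptf v P.
Proof.
case=> k [c [A [B [H ->]]]].
apply: (big_ind (fun X => 0 <= ptf v X)).
- rewrite /ptf big1 // => x _; rewrite big1 // => y _; by rewrite mxE mulr0.
- move=> X Y hX hY.
  have -> : ptf v (X + Y) = ptf v X + ptf v Y.
    rewrite /ptf -big_split; apply: eq_bigr => x _.
    rewrite -big_split; apply: eq_bigr => y _; by rewrite mxE mulrDr.
  exact: addr_ge0.
- move=> l _.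
  have -> : ptf v ((c l)%:C *: (A l *t B l)) = (c l)%:C * ptf v (A l *t B l).
    rewrite /ptf mulr_sumr; apply: eq_bigr => x _.
    rewrite mulr_sumr; apply: eq_bigr => y _; by rewrite mxE mulrCA.
  have [h0 [hA hB]] := H l.
  apply: mulr_ge0; first by rewrite ler0c.
  rewrite ptf_tens; apply: tr2; last exact: psd_psd2.
  by apply: Gm_psd2; apply: psd_psd2.
Qed.
End C.

Section M.
Variable R : realType.
Local Notation C := R[i].

Lemma ket2E (a b : 'I_2) (x : 'I_(2*2)) :
  @ket2 R a b x 0 = ((x == mxtens_index (a, b)))%:R :> C.
Proof.
rewrite /ket2 /ket.
rewrite -[x]mxtens_unindexK; case: (mxtens_unindex x) => c d.
have E1 : forall i j : 'I_1, (i == j) = true by move=> i j; rewrite (ord1 i) (ord1 j).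
rewrite !mxE mxtens_indexK /= !E1 !andbT (inj_eq (can_inj (@mxtens_indexK _ _))) xpair_eqE.
by case: (c == a); case: (d == b); rewrite /= ?mulr0 ?mulr1 ?mul0r.
Qed.

Lemma entD (A B : 'cV[C]_(2*2)) x : (A + B) x 0 = A x 0 + B x 0.
Proof. by rewrite mxE. Qed.
Lemma entB (A B : 'cV[C]_(2*2)) x : (A - B) x 0 = A x 0 - B x 0.
Proof. by rewrite !mxE. Qed.
Lemma entN (A : 'cV[C]_(2*2)) x : (- A) x 0 = - A x 0.
Proof. by rewrite !mxE. Qed.
Lemma entZ a (A : 'cV[C]_(2*2)) x : (a *: A) x 0 = a * A x 0.
Proof. by rewrite mxE. Qed.

Definition fa (al be : R) := fa' (sin al) (cos al) (sin be) (cos be) (Num.sqrt 2)^-1.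

Lemma avecE (al be : R) (k : 'I_4) (x : 'I_(2*2)) :
  avec al be k x 0 = (fa al be k x)%:C.
Proof.
rewrite /avec /phi_m /psi_m /phi_p /psi_p.
move: (ket2E o0 o0) (ket2E o0 o1) (ket2E o1 o0) (ket2E o1 o1).
move: (ket2 R o0 o0) (ket2 R o0 o1) (ket2 R o1 o0) (ket2 R o1 o1) => K00 K01 K10 K11 E00 E01 E10 E11.
case: k => [[|[|[|[|k]]]] Hk] //=; rewrite !(entD,entN,entZ) ?E00 ?E01 ?E10 ?E11;
case: x => [[|[|[|[|x]]]] Hx] //; rewrite /fa /fa' /vec4 /=;
rewrite ?(mulr0,mul0r,mulr1,mul1r,addr0,add0r,subr0,sub0r,oppr0);
by rewrite ?rmorphM ?rmorphN ?rmorph0 ?mulrN ?rmorphM.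
Qed.
End M.

Section O.
Variable R : realType.
Local Notation C := R[i].

Lemma orthoR (sa ca sb cb r : R) (k l : nat) : good sa ca sb cb r -> (k < 4)%N -> (l < 4)%N ->
  s4 (fun x => fa' sa ca sb cb r k x * fa' sa ca sb cb r l x) = (k == l)%:R.
Proof.
move=> [sa0 [ca0 [sb0 [cb0 [ha [hb [hcc [hcs hr]]]]]]]].
case: k => [|[|[|[|k]]]] // _; case: l => [|[|[|[|l]]]] // _; rewrite /s4 /=;
first [ ring
      | (transitivity (sa ^+ 2 + ca ^+ 2); [ring | exact ha])
      | (transitivity (sb ^+ 2 + cb ^+ 2); [ring | exact hb])
      | (transitivity (r ^+ 2 * (sa ^+ 2 + ca ^+ 2) + r ^+ 2 * (sb ^+ 2 + cb ^+ 2));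
          [ring | rewrite ha hb; transitivity (2 * r ^+ 2); [ring | exact hr]])
      | (transitivity (r ^+ 2 * ((sa ^+ 2 + ca ^+ 2) - (sb ^+ 2 + cb ^+ 2)));
          [ring | by rewrite ha hb subrr mulr0]) ].
Qed.

Lemma conjcM (x y : C) : conjc (x * y) = conjc x * conjc y.
Proof. by case: x => a b; case: y => c d /=; simpc. Qed.

Lemma conjcD (x y : C) : conjc (x + y) = conjc x + conjc y.
Proof. by case: x => a b; case: y => c d /=; simpc. Qed.

Lemma conjc_sum (I : finType) (F : I -> C) :
  conjc (\sum_i F i) = \sum_i conjc (F i).
Proof.
elim/big_rec2: _ => [|i a b _ IH]; last by rewrite conjcD IH.
by apply/eqP; rewrite eq_complex /= oppr0 !eqxx.
Qed.

Lemma adj_mul m n p (A : 'M[C]_(m, n)) (B : 'M[C]_(n, p)) :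
  adj (A *m B) = adj B *m adj A.
Proof.
apply/matrixP => i j; rewrite !mxE conjc_sum; apply: eq_bigr => k _.
by rewrite !mxE conjcM mulrC.
Qed.

Lemma adj_row_mx m (a b : 'cV[C]_m) :
  adj (row_mx a b) = col_mx (adj a) (adj b).
Proof.
apply/matrixP => i j; rewrite !mxE.
by case: (split i) => k; rewrite !mxE.
Qed.

Variables al be : R.
Hypothesis G : good (sin al) (cos al) (sin be) (cos be) (Num.sqrt 2)^-1.

Lemma innerE (k l : 'I_4) : (adj (avec al be k) *m avec al be l) 0 0 = (k == l)%:R.
Proof.
rewrite mxE sum4 !mxE !avecE !conjc_real.
have := @orthoR _ _ _ _ _ k l G (ltn_ord k) (ltn_ord l).
rewrite /s4 /= => E.
by rewrite -!rmorphM -!rmorphD /fa E rmorph_nat.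
Qed.
End O.

Section P.
Variable R : realType.
Local Notation C := R[i].
Variables al be : R.
Local Notation a := (avec al be).

Lemma Pak (G : good (sin al) (cos al) (sin be) (cos be) (Num.sqrt 2)^-1)
  (P : 'M[C]_(2*2)) (i j k : 'I_4) :
  Defs.hermitian P -> P *m P = P -> (P^T :=: (row_mx (a i) (a j))^T)%MS ->
  P *m a k = if (k == i) || (k == j) then a k else 0.
Proof.
move=> H1 H2 H3.
case: ifP => hk.
- have sub : ((a k)^T <= (row_mx (a i) (a j))^T)%MS.
    rewrite tr_row_mx; case/orP: hk => /eqP ->.
    + have E : (a i)^T = row_mx 1%:M 0 *m col_mx (a i)^T (a j)^T.
        by rewrite mul_row_col mul1mx mul0mx addr0.
      rewrite {1}E; exact: submxMl.
    + have E : (a j)^T = row_mx 0 1%:M *m col_mx (a i)^T (a j)^T.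
        by rewrite mul_row_col mul1mx mul0mx add0r.
      rewrite {1}E; exact: submxMl.
  have : ((a k)^T <= P^T)%MS by rewrite (H3.2 _ ((a k)^T)).2.
  case/submxP => D hD.
  have -> : a k = P *m D^T by rewrite -[a k]trmxK hD trmx_mul trmxK.
  by rewrite mulmxA H2.
- have : (P^T <= (row_mx (a i) (a j))^T)%MS by rewrite (H3.2 _ _).1 submx_refl.
  case/submxP => E hE.
  have hP : P = row_mx (a i) (a j) *m E^T by rewrite -[P]trmxK hE trmx_mul trmxK.
  rewrite -{1}H1 hP adj_mul -mulmxA adj_row_mx mul_col_mx.
  have -> : adj (a i) *m a k = 0.
    apply/matrixP => p q; rewrite (ord1 p) (ord1 q) innerE // [RHS]mxE.
    by move: hk; rewrite eq_sym; case: (i == k).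
  have -> : adj (a j) *m a k = 0.
    apply/matrixP => p q; rewrite (ord1 p) (ord1 q) innerE // [RHS]mxE.
    by move: hk; rewrite (eq_sym j k) orbC; case: (k == j).
  by rewrite col_mx0 mulmx0.
Qed.
End P.

Section Q.
Variable R : realType.
Local Notation C := R[i].
Variables al be : R.
Local Notation a := (avec al be).

Lemma Pent (G : good (sin al) (cos al) (sin be) (cos be) (Num.sqrt 2)^-1)
  (P : 'M[C]_(2*2)) (i j : 'I_4) :
  Defs.hermitian P -> P *m P = P -> (P^T :=: (row_mx (a i) (a j))^T)%MS -> i != j ->
  forall x y, P x y = (Pg (fa al be i) (fa al be j) x y)%:C.
Proof.
move=> H1 H2 H3 hij x y.
pose M : 'M[C]_(2*2) := \matrix_(z, k) a k z 0.
have hMM : adj M *m M = 1%:M.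
  apply/matrixP => k l; rewrite [RHS]mxE.
  transitivity ((adj (a k) *m a l) 0 0); last by rewrite innerE.
  by rewrite !mxE; apply: eq_bigr => z _; rewrite !mxE.
have hMM' := mulmx1C hMM.
have -> : P = (P *m M) *m adj M by rewrite -mulmxA hMM' mulmx1.
have PM : forall z k, (P *m M) z k = (P *m a k) z 0.
  by move=> z k; rewrite !mxE; apply: eq_bigr => w _; rewrite !mxE.
rewrite mxE.
under eq_bigr => k _ do rewrite PM (Pak G _ H1 H2 H3) [adj M k y]mxE [M y k]mxE.
rewrite (eq_bigr (fun k => if (k == i) || (k == j) then a k x 0 * conjc (a k y 0) else 0));
  last by move=> k _; case: ifP => _ //; rewrite mxE mul0r.
rewrite -big_mkcond (bigD1 i) /= ?eqxx // (eq_bigl (pred1 j)); last first.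
  move=> k /=; case: (eqVneq k i) => [->|ne]; rewrite ?eqxx /= ?andbF ?andbT //.
  by rewrite (negbTE hij).
rewrite big_pred1_eq !avecE !conjc_real.
by rewrite /Pg -!rmorphM -rmorphD.
Qed.

Lemma conjc_mul_ge0 (z : C) : 0 <= conjc z * z.
Proof.
case: z => p q /=; simpc; apply/andP; split; first by rewrite mulrC subrr.
by rewrite addr_ge0 // -expr2 sqr_ge0.
Qed.

Lemma psdP (P : 'M[C]_(2*2)) : Defs.hermitian P -> P *m P = P -> psd P.
Proof.
move=> H1 H2; split => // v.
have -> : adj v *m P *m v = adj (P *m v) *m (P *m v).
  by rewrite adj_mul H1 mulmxA -(mulmxA _ P P) H2.
rewrite mxE; apply: sumr_ge0 => z _; rewrite mxE.
exact: conjc_mul_ge0.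
Qed.
End Q.

Lemma good_trig (R : realType) (al be : R) :
  0 <= al <= pi / 2 -> 0 <= be <= pi / 2 ->
  al != be -> al != pi / 2 - be ->
  good (sin al) (cos al) (sin be) (cos be) (Num.sqrt 2)^-1.
Proof.
move=> /andP [a0 a1] /andP [b0 b1] hab hab'.
have pi0 : 0 < pi :> R := pi_gt0 R.
have hpi : pi / 2 <= pi :> R by rewrite ler_pdivrMr // ler_peMr // ?ler1n // ltW.
split; first by apply: sin_ge0_pi; rewrite a0 /= (le_trans a1 hpi).
split; first by apply: cos_ge0_pihalf; rewrite a1 andbT (le_trans _ a0) // oppr_le0 divr_ge0 // ltW.
split; first by apply: sin_ge0_pi; rewrite b0 /= (le_trans b1 hpi).
split; first by apply: cos_ge0_pihalf; rewrite b1 andbT (le_trans _ b0) // oppr_le0 divr_ge0 // ltW.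
split; first by rewrite addrC cos2Dsin2.
split; first by rewrite addrC cos2Dsin2.
split.
  apply/eqP => E; move/eqP: hab; apply; apply: cos_inj => //; rewrite in_itv /=.
  - by rewrite a0 (le_trans a1 hpi).
  - by rewrite b0 (le_trans b1 hpi).
split.
  apply/eqP => E; move/eqP: hab'; apply; apply: cos_inj => //; rewrite ?in_itv /=.
  - by rewrite a0 (le_trans a1 hpi).
  - by rewrite subr_ge0 b1 /= lerBlDr ler_wpDr.
  - by rewrite E cosB cos_pihalf sin_pihalf mul0r add0r mul1r.
by rewrite exprVn sqr_sqrtr ?ler0n // mulfV // pnatr_eq0.
Qed.

Unset Implicit Arguments.
Theorem proposition1 (R : realType) (al be : R) :
  0 <= al <= pi / 2 -> 0 <= be <= pi / 2 ->
  al != be -> al != pi / 2 - be ->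
  forall (i j : 'I_4), i != j ->
  forall P : 'M[R[i]]_(2 * 2),
    projector_onto P (row_mx (avec al be i) (avec al be j)) ->
    entangled P.
Proof.
move=> hal hbe hab hab' i j hij P [H1 [H2 H3]].
have G := good_trig hal hbe hab hab'.
split; first exact: psdP.
move=> sep.
apply: (@pair_contra _ _ _ _ _ _ i j G (ltn_ord i) (ltn_ord j) hij) => v.
have := ptf_sep v sep.
have -> : ptf v P = (Fw v (Pg (fa al be i) (fa al be j)))%:C.
  rewrite /ptf !sum4 !(Pent G H1 H2 H3 hij) /Fw /s4 /=.
  by rewrite -!rmorphM -!rmorphD.
by rewrite ler0c.
Qed.
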